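(* Let $\Delta$ be a root system in a Euclidean space $\mathfrak h^*$ and let $\Delta^0\subset\Delta$ be a root subsystem. Then for every $\alpha\in\Delta$: if there exists $\beta\in\Delta\setminus\Delta^0$ with $(\alpha,\beta)\neq0$, then $\alpha\in\mathrm{span}(\Delta\setminus\Delta^0)$. In particular, if $\Delta$ is irreducible and $\Delta^0$ is a proper subsystem, then $\mathrm{span}(\Delta\setminus\Delta^0)=\mathfrak h^*$.
   Context: A root subsystem of $\Delta$ is a subset $\Delta^0\subset\Delta$ which is itself a root system (in its span). Here $\Delta$ spans $\mathfrak h^*$. *)

(* Defs.v *)
From HB Require Import structures.
From mathcomp Require Import all_boot all_order all_algebra.
From mathcomp Require Import reals.
Set Implicit Arguments. Unset Strict Implicit. Unset Printing Implicit Defensive.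
Import Order.TTheory GRing.Theory Num.Theory.
Local Open Scope ring_scope.

(* Euclidean space h^* of dimension n modelled as 'rV[R]_n (R : realType)
   with the standard inner product. *)
Definition dot (R : realType) (n : nat) (u v : 'rV[R]_n) : R := (u *m v^T) 0 0.

Definition refl (R : realType) (n : nat) (a b : 'rV[R]_n) : 'rV[R]_n :=
  b - (2 * dot b a / dot a a) *: a.

(* D is a (crystallographic, not necessarily reduced) root system in its
   own span <<D>>: finite (a seq), no zero vector, stable under the
   reflections s_a (a in D), integral Cartan numbers. *)
Definition root_system (R : realType) (n : nat) (D : seq 'rV[R]_n) : Prop :=
  [/\ 0 \notin D,
      forall a b, a \in D -> b \in D -> refl a b \in D &
      forall a b, a \in D -> b \in D -> 2 * dot b a / dot a a \is a Num.int].

Definition root_subsystem (R : realType) (n : nat) (D0 D : seq 'rV[R]_n) : Prop :=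
  {subset D0 <= D} /\ root_system D0.

Definition irreducible_rs (R : realType) (n : nat) (D : seq 'rV[R]_n) : Prop :=
  D != [::] /\
  ~ (exists P : pred 'rV[R]_n,
        [/\ exists2 a, a \in D & P a,
            exists2 a, a \in D & ~~ P a &
            forall a b, a \in D -> b \in D -> P a -> ~~ P b -> dot a b = 0]).

(* Main.v *)
Require Import Defs.
From HB Require Import structures.
From mathcomp Require Import all_boot all_order all_algebra.
From mathcomp Require Import reals.
From mathcomp Require Import ring.
Import Order.TTheory GRing.Theory Num.Theory.
Local Open Scope ring_scope.

Section Aux.
Variables (R : realType) (n : nat).
Implicit Types (u v w : 'rV[R]_n).

Lemma dotC u v : dot u v = dot v u.
Proof.
rewrite /dot; have -> : (u *m v^T) 0 0 = (u *m v^T)^T 0 0 by rewrite [in RHS]mxE.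
by rewrite trmx_mul trmxK.
Qed.

Lemma dotDr u v w : dot u (v + w) = dot u v + dot u w.
Proof. by rewrite /dot linearD /= mulmxDr mxE. Qed.

Lemma dotZr u k v : dot u (k *: v) = k * dot u v.
Proof. by rewrite /dot linearZ /= -scalemxAr mxE. Qed.

Lemma dotBr u v w : dot u (v - w) = dot u v - dot u w.
Proof. by rewrite dotDr -scaleN1r dotZr mulN1r. Qed.

Lemma dotBl u v w : dot (v - w) u = dot v u - dot w u.
Proof. by rewrite dotC dotBr dotC [dot u w]dotC. Qed.

Lemma dotZl u k v : dot (k *: v) u = k * dot v u.
Proof. by rewrite dotC dotZr dotC. Qed.

Lemma dot0r u : dot u 0 = 0.
Proof. by rewrite -(scale0r (0 : 'rV[R]_n)) dotZr mul0r. Qed.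

Lemma dot_self_eq0 u : (dot u u == 0) = (u == 0).
Proof.
apply/idP/idP; last by move/eqP->; rewrite dot0r.
rewrite /dot mxE => /eqP H.
have H0 : forall j, true -> 0 <= u 0 j * u^T j 0.
  by move=> j _; rewrite mxE -expr2 sqr_ge0.
have := (psumr_eq0P H0 H) => Hj.
apply/eqP/rowP => j; rewrite mxE.
have := Hj j isT; rewrite mxE => /eqP; rewrite mulf_eq0 orbb => /eqP.
by [].
Qed.

Lemma refl_invol (a b : 'rV[R]_n) : a != 0 -> refl a (refl a b) = b.
Proof.
move=> a0; have aa : dot a a != 0 by rewrite dot_self_eq0.
rewrite /refl dotBl dotZl.
set c := 2 * dot b a / dot a a.
have -> : 2 * (dot b a - c * dot a a) / dot a a = - c.
  rewrite /c; field; exact: aa.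
by rewrite scaleNr opprK subrK.
Qed.

Lemma dot_span b (X : seq 'rV[R]_n) v :
  (forall c, c \in X -> dot b c = 0) -> v \in <<X>>%VS -> dot b v = 0.
Proof.
move=> Hc; rewrite -[X]/(tval (in_tuple X)) => Hv; rewrite (coord_span Hv).
rewrite (big_morph (dot b) (dotDr b) (dot0r b)).
apply: big1 => i _; rewrite dotZr Hc ?mulr0 //.
by apply: mem_nth.
Qed.

End Aux.

Theorem lemma3p4 (R : realType) (n : nat) (D D0 : seq 'rV[R]_n) :
  root_system D -> <<D>>%VS = fullv -> root_subsystem D0 D ->
  (forall a, a \in D ->
     (exists2 b, b \in [seq x <- D | x \notin D0] & dot a b != 0) ->
     a \in <<[seq x <- D | x \notin D0]>>%VS)
  /\
  (irreducible_rs D -> (exists2 a, a \in D & a \notin D0) ->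
     <<[seq x <- D | x \notin D0]>>%VS = fullv).
Proof.
move=> [D0n Drefl Dint] HD [sub0 [D00n D0refl D0int]].
set S := [seq x <- D | x \notin D0].
have part1 : forall a, a \in D ->
     (exists2 b, b \in S & dot a b != 0) -> a \in <<S>>%VS.
  move=> a aD [b]; rewrite mem_filter => /andP [bD0 bD] ab.
  have [aD0|aD0] := boolP (a \in D0); last first.
    by apply: memv_span; rewrite mem_filter aD0 aD.
  have a0 : a != 0 by apply: contraNneq D00n => <-.
  have aa : dot a a != 0 by rewrite dot_self_eq0.
  have rS : refl a b \in S.
    rewrite mem_filter Drefl // andbT; apply: contra bD0 => H.
    by rewrite -(@refl_invol R n a b a0) D0refl.
  set c := 2 * dot b a / dot a a.
  have c0 : c != 0.
    rewrite /c; apply: mulf_neq0; last by rewrite invr_eq0.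
    apply: mulf_neq0; first by rewrite pnatr_eq0.
    by rewrite dotC.
  have -> : a = c^-1 *: (b - refl a b).
    by rewrite /refl opprB addrC subrK scalerA mulVf // scale1r.
  by apply: memvZ; apply: memvB; apply: memv_span; rewrite // mem_filter bD0 bD.
split => // [[_ Hirr]] [a0 a0D a0D0].
apply/eqP; rewrite eqEsubv subvf /= -HD; apply/span_subvP.
have [/allP H|] := boolP (all (fun x => x \in <<S>>%VS) D); first exact: H.
move/allPn => [b bD bS]; exfalso; apply: Hirr.
exists (fun x => x \in <<S>>%VS); split.
- by exists a0 => //; apply: memv_span; rewrite mem_filter a0D0 a0D.
- by exists b.
move=> x y xD yD xS yS; apply/eqP; apply: contraNT yS => xy.
apply: part1 => //.
have [//|] := boolP (has (fun c => dot y c != 0) S) ; first by move/hasP => [c ? ?]; exists c.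
move/hasPn => Hn; exfalso; move/negP: xy; apply.
rewrite dotC; apply/eqP; apply: (@dot_span R n y S) => // c cS.
by apply/eqP; move: (Hn c cS); rewrite negbK.
Qed.
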